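(* Let $(\xi_n)_{n\geq1}$ be i.i.d. with $\mathbf{P}(\xi_1=1)=p=1-\mathbf{P}(\xi_1=-1)$, $p\in(0,1)$. For $x\geq1$ set $W_0:=x$, $B_1:=1$, $W_n:=W_{n-1}+\xi_nB_n$, $B_{n+1}:=B_n2^{\xi_n}$ for $n\geq1$, and $f(x,p):=\mathbf{P}(W_n\leq0\text{ for some }n)$. Define functions $f_n:\mathbb{R}\times(0,1)\to\mathbb{R}$ by $f_0(x,p):=\mathbf{1}_{(-\infty,2]}(x)$ and $$f_{n+1}(x,p)=p\,f_n\!\left(\tfrac{x+1}{2},p\right)+(1-p)\,f_n(2x-2,p),\qquad n\in\mathbb{N}.$$ Then for every $x>2$, $f_n(x,\cdot)\to f(x,\cdot)$ locally uniformly on $(0,1/2)$, and for every $p\in(0,1/2)$, $f_n(\cdot,p)\to f(\cdot,p)$ locally uniformly on $(2,\infty)$. In particular, $$f(x,p)=p\,f\!\left(\tfrac{x+1}{2},p\right)+(1-p)\,f(2x-2,p)\qquad\text{for all }(x,p)\in(2,\infty)\times(0,1/2).$$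
   Context: $f(x,p)$ is the ruin probability of a gambler with initial fortune $x$ who starts by betting $1$, doubles the bet after each win and halves it after each loss, winning each round independently with probability $p$. *)

(* Defs.v *)
From Stdlib Require Import Reals List.
From Coquelicot Require Import Coquelicot.
Open Scope R_scope.

(* A finite history of rounds: true = the gambler wins the round (xi = +1),
   false = the gambler loses it (xi = -1). *)

Fixpoint paths (N : nat) : list (list bool) :=
  match N with
  | O => nil :: nil
  | S n => map (cons true) (paths n) ++ map (cons false) (paths n)
  end.

Fixpoint path_weight (p : R) (s : list bool) : R :=
  match s with
  | nil => 1
  | e :: t => (if e then p else 1 - p) * path_weight p t
  end.

(* ruined w b s = true iff, starting from current fortune w = W_{k} and
   current bet b = B_{k+1}, and playing the rounds s, the fortune
   W_n := W_{n-1} + xi_n B_n  (with B_{n+1} := B_n 2^{xi_n})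
   becomes <= 0 at some step. *)
Fixpoint ruined (w b : R) (s : list bool) : bool :=
  match s with
  | nil => false
  | e :: t =>
      let w' := if e then w + b else w - b in
      let b' := if e then 2 * b else b / 2 in
      if Rle_dec w' 0 then true else ruined w' b' t
  end.

Definition ruin_prob_by (x p : R) (N : nat) : R :=
  fold_right Rplus 0
    (map (fun s => path_weight p s * (if ruined x 1 s then 1 else 0)) (paths N)).

(* f(x,p) = P(W_n <= 0 for some n) = lim_N P(W_n <= 0 for some n <= N)
   (continuity of the probability measure along the increasing events). *)
Definition ruin_f (x p : R) : R := real (Lim_seq (fun N => ruin_prob_by x p N)).

Fixpoint f_approx (n : nat) (x p : R) : R :=
  match n with
  | O => if Rle_dec x 2 then 1 else 0
  | S m => p * f_approx m ((x + 1) / 2) p + (1 - p) * f_approx m (2 * x - 2) p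
  end.

(* Main.v *)
Require Import Defs.
From Stdlib Require Import Reals Lra Lia Psatz List.
From Coquelicot Require Import Coquelicot.
Open Scope R_scope.

Notation sumR l := (fold_right Rplus 0 l).

Lemma sumR_app l1 l2 : sumR (l1 ++ l2) = sumR l1 + sumR l2.
Proof. induction l1; simpl; simpl; [lra|]. rewrite IHl1. lra. Qed.

Lemma sumR_scale {A} (g : A -> R) c l :
  sumR (map (fun s => c * g s) l) = c * sumR (map g l).
Proof. induction l; simpl; [lra|]. rewrite IHl. lra. Qed.

Lemma weights_sum p n : sumR (map (path_weight p) (paths n)) = 1.
Proof.
  induction n; [simpl; lra|].
  simpl. rewrite map_app, sumR_app, !map_map. simpl.
  rewrite (sumR_scale (path_weight p) p), (sumR_scale (path_weight p) (1-p)), IHn. lra.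
Qed.

Lemma ruined_scale s : forall w b c, 0 < c -> ruined (c*w) (c*b) s = ruined w b s.
Proof.
  induction s as [|e t IH]; intros w b c Hc; simpl; auto.
  destruct e.
  - replace (c*w + c*b) with (c*(w+b)) by ring.
    replace (2*(c*b)) with (c*(2*b)) by ring.
    rewrite IH by auto.
    destruct (Rle_dec (c*(w+b)) 0), (Rle_dec (w+b) 0); auto; exfalso; nra.
  - replace (c*w - c*b) with (c*(w-b)) by ring.
    replace (c*b/2) with (c*(b/2)) by (field).
    rewrite IH by auto.
    destruct (Rle_dec (c*(w-b)) 0), (Rle_dec (w-b) 0); auto; exfalso; nra.
Qed.

Fixpoint Rr (n : nat) (x p : R) : R :=
  match n with
  | O => 0
  | S m => p * (if Rle_dec ((x+1)/2) 0 then 1 else Rr m ((x+1)/2) p)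
         + (1-p) * (if Rle_dec (2*x-2) 0 then 1 else Rr m (2*x-2) p)
  end.

Lemma ruin_prob_Rr n : forall x p, ruin_prob_by x p n = Rr n x p.
Proof.
  induction n; intros x p; unfold ruin_prob_by in *.
  - simpl. lra.
  - simpl paths. rewrite map_app, !map_map.
    rewrite sumR_app. simpl Rr.
    f_equal.
    + simpl.
      destruct (Rle_dec (x+1) 0) as [H|H]; destruct (Rle_dec ((x+1)/2) 0) as [H'|H']; try (exfalso; lra).
      * transitivity (p * sumR (map (path_weight p) (paths n))); [| rewrite weights_sum; lra].
        rewrite <- sumR_scale. f_equal. apply map_ext. intros s.
        destruct (Rle_dec (x + 1) 0); [lra|contradiction].
      * rewrite <- IHn.
        rewrite <- sumR_scale. f_equal. apply map_ext. intros s.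
        destruct (Rle_dec (x + 1) 0); [contradiction|].
        assert (E: ruined (x+1) (2*1) s = ruined ((x+1)/2) 1 s).
        { rewrite <- (ruined_scale s ((x+1)/2) 1 2) by lra. replace (2*((x+1)/2)) with (x+1) by field. reflexivity. }
        rewrite E. lra.
    + simpl.
      destruct (Rle_dec (x-1) 0) as [H|H]; destruct (Rle_dec (2*x-2) 0) as [H'|H']; try (exfalso; lra).
      * transitivity ((1-p) * sumR (map (path_weight p) (paths n))); [| rewrite weights_sum; lra].
        rewrite <- sumR_scale. f_equal. apply map_ext. intros s.
        destruct (Rle_dec (x - 1) 0); [lra|contradiction].
      * rewrite <- IHn.
        rewrite <- sumR_scale. f_equal. apply map_ext. intros s.
        destruct (Rle_dec (x - 1) 0); [contradiction|].
        assert (E: ruined (x-1) (1/2) s = ruined (2*x-2) 1 s).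
        { rewrite <- (ruined_scale s (2*x-2) 1 (/2)) by lra. replace (/2*(2*x-2)) with (x-1) by field. replace (/2*1) with (1/2) by field. reflexivity. }
        rewrite E. lra.
Qed.

Section P.
Variable p : R.
Hypothesis Hp : 0 < p < 1.

Lemma f_bounds n : forall x, 0 <= f_approx n x p <= 1.
Proof.
  induction n; intros x; simpl.
  - destruct (Rle_dec x 2); lra.
  - specialize (IHn ((x+1)/2)) as H1. specialize (IHn (2*x-2)) as H2. nra.
Qed.

Lemma f_one n : forall x, x <= 2 -> f_approx n x p = 1.
Proof.
  induction n; intros x Hx; simpl.
  - destruct (Rle_dec x 2); lra.
  - rewrite !IHn by lra. ring.
Qed.

Lemma Rr_bounds n : forall x, 0 <= Rr n x p <= 1.
Proof.
  induction n; intros x; simpl; [lra|].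
  destruct (Rle_dec ((x+1)/2) 0); destruct (Rle_dec (2*x-2) 0);
  try specialize (IHn ((x+1)/2)) as H1; try specialize (IHn (2*x-2)) as H2; nra.
Qed.

Lemma Rr_mono n : forall x, Rr n x p <= Rr (S n) x p.
Proof.
  induction n; intros x.
  - simpl Rr at 1. pose proof (Rr_bounds 1 x). lra.
  - change (Rr (S n) x p) with
      (p * (if Rle_dec ((x+1)/2) 0 then 1 else Rr n ((x+1)/2) p)
         + (1-p) * (if Rle_dec (2*x-2) 0 then 1 else Rr n (2*x-2) p)).
    change (Rr (S (S n)) x p) with
      (p * (if Rle_dec ((x+1)/2) 0 then 1 else Rr (S n) ((x+1)/2) p)
         + (1-p) * (if Rle_dec (2*x-2) 0 then 1 else Rr (S n) (2*x-2) p)).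
    destruct (Rle_dec ((x+1)/2) 0); destruct (Rle_dec (2*x-2) 0);
    try specialize (IHn ((x+1)/2)) as H1; try specialize (IHn (2*x-2)) as H2; nra.
Qed.

Lemma Rr_le_f n : forall x, Rr n x p <= f_approx n x p.
Proof.
  induction n; intros x; simpl.
  - pose proof (f_bounds 0 x). simpl in H. lra.
  - destruct (Rle_dec ((x+1)/2) 0); destruct (Rle_dec (2*x-2) 0);
    try rewrite (f_one n ((x+1)/2)) by lra; try rewrite (f_one n (2*x-2)) by lra;
    try specialize (IHn ((x+1)/2)) as H1; try specialize (IHn (2*x-2)) as H2; pose proof (Rr_bounds n ((x+1)/2)); pose proof (Rr_bounds n (2*x-2)); nra.
Qed.

Definition cc := p * ((1-p)*(1-p)).
Lemma cc_bounds : 0 < cc < 1.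
Proof.
  unfold cc. assert (0 < (1-p)*(1-p) < 1) by nra.
  split; [apply Rmult_lt_0_compat; lra|]. nra.
Qed.

Lemma Rr_step3 k B : 0 <= B -> (forall z, z <= 2 -> 1 - Rr k z p <= B) ->
  forall z, z <= 2 -> 1 - Rr (k+3) z p <= (1 - cc) * B.
Proof.
  intros HB H z Hz.
  assert (H1 : forall z, z <= 2 -> 1 - Rr (S k) z p <= B).
  { intros y Hy. pose proof (Rr_mono k y). specialize (H y Hy). lra. }
  assert (H2 : forall z, z <= 2 -> 1 - Rr (S (S k)) z p <= B).
  { intros y Hy. pose proof (Rr_mono (S k) y). specialize (H1 y Hy). lra. }
  assert (C1 : forall z, z <= 1 -> 1 - Rr (S k) z p <= p * B).
  { intros y Hy. simpl Rr.
    destruct (Rle_dec (2*y-2) 0); [|lra].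
    destruct (Rle_dec ((y+1)/2) 0).
    - nra.
    - specialize (H ((y+1)/2) ltac:(lra)). nra. }
  assert (C2 : forall z, z <= 3/2 -> 1 - Rr (S (S k)) z p <= (1 - (1-p)*(1-p)) * B).
  { intros y Hy. assert (0 <= (1 - (1-p)*(1-p)) * B) by (apply Rmult_le_pos; nra).
    change (Rr (S (S k)) y p) with
      (p * (if Rle_dec ((y+1)/2) 0 then 1 else Rr (S k) ((y+1)/2) p)
         + (1-p) * (if Rle_dec (2*y-2) 0 then 1 else Rr (S k) (2*y-2) p)).
    destruct (Rle_dec ((y+1)/2) 0); destruct (Rle_dec (2*y-2) 0).
    - nra.
    - specialize (C1 (2*y-2) ltac:(lra)).
      assert ((1-p) * (1 - Rr (S k) (2*y-2) p) <= (1-p) * (p*B)) by (apply Rmult_le_compat_l; lra).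
      assert (0 <= p*B) by (apply Rmult_le_pos; nra). nra.
    - specialize (H1 ((y+1)/2) ltac:(lra)).
      assert (p * (1 - Rr (S k) ((y+1)/2) p) <= p * B) by (apply Rmult_le_compat_l; lra).
      assert (0 <= p*(1-p)*B) by (apply Rmult_le_pos; nra). nra.
    - specialize (C1 (2*y-2) ltac:(lra)). specialize (H1 ((y+1)/2) ltac:(lra)).
      assert (p * (1 - Rr (S k) ((y+1)/2) p) <= p * B) by (apply Rmult_le_compat_l; lra).
      assert ((1-p) * (1 - Rr (S k) (2*y-2) p) <= (1-p) * (p*B)) by (apply Rmult_le_compat_l; lra).
      nra. }
  replace (k+3)%nat with (S (S (S k))) by lia.
  change (Rr (S (S (S k))) z p) with
      (p * (if Rle_dec ((z+1)/2) 0 then 1 else Rr (S (S k)) ((z+1)/2) p)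
         + (1-p) * (if Rle_dec (2*z-2) 0 then 1 else Rr (S (S k)) (2*z-2) p)).
  unfold cc. assert (0 <= (1 - p*((1-p)*(1-p))) * B) by (apply Rmult_le_pos; nra).
  destruct (Rle_dec ((z+1)/2) 0); destruct (Rle_dec (2*z-2) 0).
  - nra.
  - specialize (H2 (2*z-2) ltac:(lra)).
    assert ((1-p) * (1 - Rr (S (S k)) (2*z-2) p) <= (1-p) * B) by (apply Rmult_le_compat_l; lra).
    assert (0 <= p*B) by (apply Rmult_le_pos; nra).
    assert (0 <= p*((1-p)*(1-p))*B) by (apply Rmult_le_pos; nra). nra.
  - specialize (C2 ((z+1)/2) ltac:(lra)).
    assert (p * (1 - Rr (S (S k)) ((z+1)/2) p) <= p * ((1 - (1-p)*(1-p)) * B)) by (apply Rmult_le_compat_l; lra).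
    assert (0 <= (1-p)*B) by (apply Rmult_le_pos; nra). nra.
  - specialize (C2 ((z+1)/2) ltac:(lra)). specialize (H2 (2*z-2) ltac:(lra)).
    assert (p * (1 - Rr (S (S k)) ((z+1)/2) p) <= p * ((1 - (1-p)*(1-p)) * B)) by (apply Rmult_le_compat_l; lra).
    assert ((1-p) * (1 - Rr (S (S k)) (2*z-2) p) <= (1-p) * B) by (apply Rmult_le_compat_l; lra).
    nra.
Qed.

Lemma Rr_geom j : forall z, z <= 2 -> 1 - Rr (3*j) z p <= (1 - cc)^j.
Proof.
  induction j; intros z Hz.
  - simpl. lra.
  - replace (3 * S j)%nat with (3*j+3)%nat by lia.
    pose proof cc_bounds. assert (0 <= 1 - cc <= 1) by lra.
    simpl pow. apply Rr_step3; auto. apply pow_le; lra.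
Qed.

Lemma f_le_Rr j : forall n x, f_approx n x p <= Rr (n + 3*j) x p + (1-cc)^j.
Proof.
  pose proof cc_bounds. assert (0 <= 1 - cc <= 1) by lra.
  assert (0 <= (1-cc)^j) by (apply pow_le; lra).
  induction n; intros x.
  - change (0 + 3*j)%nat with (3*j)%nat. cbn [f_approx]. destruct (Rle_dec x 2).
    + pose proof (Rr_geom j x r). lra.
    + pose proof (Rr_bounds (3*j) x). lra.
  - cbn [f_approx]. change (S n + 3*j)%nat with (S (n + 3*j)). cbn [Rr].
    pose proof (IHn ((x+1)/2)). pose proof (IHn (2*x-2)).
    pose proof (Rr_bounds (n + 3*j) ((x+1)/2)).
    pose proof (Rr_bounds (n + 3*j) (2*x-2)).
    destruct (Rle_dec ((x+1)/2) 0); destruct (Rle_dec (2*x-2) 0); nra.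
Qed.

Lemma f_le_lim x : forall n, f_approx n x p <= real (Lim_seq (fun N => Rr N x p)).
Proof.
  set (u := fun N => Rr N x p).
  assert (Hex : ex_finite_lim_seq u).
  { apply ex_finite_lim_seq_incr with 1. intros; apply Rr_mono. intros; apply Rr_bounds. }
  pose proof (Lim_seq_correct' u Hex) as Hl.
  set (l := real (Lim_seq u)) in *.
  assert (Hle : forall n, u n <= l).
  { apply is_lim_seq_incr_compare; auto. intros; apply Rr_mono. }
  intros n.
  destruct (Rle_dec (f_approx n x p) l) as [H|H]; auto.
  exfalso. pose proof cc_bounds.
  destruct (pow_lt_1_zero (1-cc) ltac:(rewrite Rabs_right; lra) (f_approx n x p - l) ltac:(lra)) as [j Hj].
  specialize (Hj j (Nat.le_refl j)).
  pose proof (f_le_Rr j n x). specialize (Hle (n + 3*j)%nat). unfold u in Hle.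
  pose proof (Rle_abs ((1-cc)^j)). lra.
Qed.

Lemma ruin_f_lim x : is_lim_seq (fun n => f_approx n x p) (ruin_f x p).
Proof.
  set (u := fun N => Rr N x p).
  assert (Hex : ex_finite_lim_seq u).
  { apply ex_finite_lim_seq_incr with 1. intros; apply Rr_mono. intros; apply Rr_bounds. }
  pose proof (Lim_seq_correct' u Hex) as Hl.
  assert (E : ruin_f x p = real (Lim_seq u)).
  { unfold ruin_f. f_equal. apply Lim_seq_ext. intros; apply ruin_prob_Rr. }
  rewrite E.
  apply is_lim_seq_le_le with (u := u) (w := fun _ => real (Lim_seq u)).
  - intros n. split. apply Rr_le_f. apply f_le_lim.
  - exact Hl.
  - apply is_lim_seq_const.
Qed.

End P.
Lemma exp_le' a b : a <= b -> exp a <= exp b.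
Proof. intros [H|H]. left; apply exp_increasing; auto. subst; lra. Qed.

Definition psi (th L y : R) : R :=
  if Rle_dec y L then 1 else exp (- th * (ln (y-1) - ln (L-1))).

Lemma psi_bounds th L y : 0 <= th -> 1 < L -> 0 <= psi th L y <= 1.
Proof.
  intros Hth HL. unfold psi. destruct (Rle_dec y L); [lra|].
  split; [left; apply exp_pos|].
  apply Rle_trans with (exp 0); [apply exp_le' | rewrite exp_0; lra].
  assert (ln (L-1) <= ln (y-1)) by (apply ln_le; lra). nra.
Qed.

Lemma psi_small th L : 0 < th -> 1 < L -> forall eps, 0 < eps ->
  exists M, L <= M /\ forall y, M < y -> psi th L y <= eps.
Proof.
  intros Hth HL eps Heps.
  exists (L + 1 + exp (ln (L-1) + Rabs (ln eps) / th)).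
  split. { pose proof (exp_pos (ln (L-1) + Rabs (ln eps) / th)). lra. }
  intros y Hy. unfold psi. destruct (Rle_dec y L).
  { pose proof (exp_pos (ln (L-1) + Rabs (ln eps) / th)). lra. }
  assert (H1 : ln (L-1) + Rabs (ln eps) / th < ln (y-1)).
  { rewrite <- (ln_exp (ln (L-1) + Rabs (ln eps) / th)).
    apply ln_increasing. apply exp_pos. pose proof (exp_pos (ln (L-1) + Rabs (ln eps) / th)). lra. }
  assert (H2 : Rabs (ln eps) < th * (ln (y-1) - ln (L-1))).
  { assert (Rabs (ln eps) / th * th = Rabs (ln eps)) by (field; lra).
    nra. }
  rewrite <- (exp_ln eps) by auto. apply exp_le'.
  pose proof (Rle_abs (- ln eps)). rewrite Rabs_Ropp in H. lra.
Qed.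

Section Super.
Variables (p q d L : R).
Hypothesis Hp : 0 <= p <= 1.
Hypothesis Hq : 1 < q <= 2.
Hypothesis Hd : 0 < d.
Hypothesis Hineq : p * q + (1-p) * ((1+d)/q) <= 1.
Hypothesis HL : 2 + 1/(2*d) <= L.
Let th := ln q / ln 2.

Lemma th_props : 0 < th <= 1 /\ th * ln 2 = ln q.
Proof.
  assert (H2 : 0 < ln 2) by (rewrite <- ln_1; apply ln_increasing; lra).
  assert (0 < ln q) by (rewrite <- ln_1; apply ln_increasing; lra).
  assert (ln q <= ln 2) by (apply ln_le; lra).
  unfold th. split; [split|].
  - apply Rdiv_lt_0_compat; auto.
  - apply Rmult_le_reg_r with (ln 2); auto. field_simplify; lra.
  - field. lra.
Qed.

Lemma psi_super y : p * psi th L ((y+1)/2) + (1-p) * psi th L (2*y-2) <= psi th L y.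
Proof.
  destruct th_props as [[Hth0 Hth1] Hthq].
  assert (HL1 : 2 < L). { assert (0 < 1/(2*d)) by (apply Rdiv_lt_0_compat; lra). lra. }
  unfold psi at 3. destruct (Rle_dec y L).
  { pose proof (psi_bounds th L ((y+1)/2) ltac:(lra) ltac:(lra)).
    pose proof (psi_bounds th L (2*y-2) ltac:(lra) ltac:(lra)). nra. }
  set (A := ln (y-1) - ln (L-1)).
  set (P := exp (- th * A)).
  assert (HP : 0 < P) by apply exp_pos.
  assert (Hln2 : 0 < ln 2) by (rewrite <- ln_1; apply ln_increasing; lra).
  assert (W : psi th L ((y+1)/2) <= P * q).
  { assert (E1 : ln ((y+1)/2 - 1) = ln (y-1) - ln 2).
    { replace ((y+1)/2 - 1) with ((y-1) * / 2) by field.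
      rewrite ln_mult by lra. rewrite ln_Rinv by lra. ring. }
    assert (E2 : P * q = exp (- th * (ln ((y+1)/2 - 1) - ln (L-1)))).
    { rewrite E1. unfold P. rewrite <- (exp_ln q) by lra. rewrite <- exp_plus.
      f_equal. unfold A. rewrite <- Hthq. ring. }
    rewrite E2. unfold psi. destruct (Rle_dec ((y+1)/2) L); [|lra].
    apply Rle_trans with (exp 0); [rewrite exp_0; lra | apply exp_le'].
    assert (ln ((y+1)/2 - 1) <= ln (L-1)) by (apply ln_le; lra). nra. }
  assert (Lo : psi th L (2*y-2) <= P * ((1+d)/q)).
  { unfold psi. destruct (Rle_dec (2*y-2) L); [lra|].
    assert (E1 : ln (2*y-2-1) >= ln (y-1) + ln 2 - ln (1+d)).
    { assert (Hy : 1/(2*d) <= y - 2) by lra.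
      assert (Hy2 : 1 <= 2*d*(y-2)).
      { apply Rmult_le_compat_l with (r := 2*d) in Hy; [|lra].
        replace (2*d*(1/(2*d))) with 1 in Hy by (field; lra). lra. }
      assert (Hb : (y-1) * 2 * / (1+d) <= 2*y-2-1).
      { apply Rmult_le_reg_r with (1+d); [lra|].
        replace ((y-1)*2*/(1+d)*(1+d)) with ((y-1)*2) by (field; lra). nra. }
      assert (Hpos : 0 < (y-1) * 2 * / (1+d)).
      { apply Rmult_lt_0_compat; [lra|]. apply Rinv_0_lt_compat; lra. }
      assert (Hl : ln ((y-1) * 2 * / (1+d)) = ln (y-1) + ln 2 - ln (1+d)).
      { rewrite ln_mult; [|nra|apply Rinv_0_lt_compat; lra].
        rewrite ln_mult by lra. rewrite ln_Rinv by lra. ring. }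
      apply Rle_ge. rewrite <- Hl. apply ln_le; auto. }
    assert (Hd0 : 0 <= ln (1+d)) by (rewrite <- ln_1; apply ln_le; lra).
    assert (E2 : P * ((1+d)/q) = exp (- th * A - ln q + ln (1+d))).
    { unfold P. rewrite !exp_plus. unfold Rminus. rewrite exp_plus, exp_Ropp, !exp_ln by lra.
      field. lra. }
    rewrite E2. apply exp_le'. unfold A.
    assert (th * ln (1+d) <= ln (1+d)) by nra.
    assert (th * (ln (2*y-2-1)) >= th * (ln (y-1) + ln 2 - ln (1+d))).
    { apply Rle_ge. apply Rmult_le_compat_l; lra. }
    nra. }
  assert (p * psi th L ((y+1)/2) <= p * (P*q)) by (apply Rmult_le_compat_l; lra).
  assert ((1-p) * psi th L (2*y-2) <= (1-p) * (P*((1+d)/q))) by (apply Rmult_le_compat_l; lra).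
  assert (P * (p * q + (1-p) * ((1+d)/q)) <= P * 1) by (apply Rmult_le_compat_l; lra).
  nra.
Qed.
End Super.

Fixpoint Ev (g : R -> R) (n : nat) (x p : R) : R :=
  match n with
  | O => g x
  | S m => p * Ev g m ((x+1)/2) p + (1-p) * Ev g m (2*x-2) p
  end.

Fixpoint sN (M' : R) (n : nat) (x p : R) : R :=
  match n with
  | O => if Rle_dec x 2 then 0 else if Rle_dec x M' then 1 else 0
  | S m => if Rle_dec x 2 then 0 else if Rle_dec x M' then
             p * sN M' m ((x+1)/2) p + (1-p) * sN M' m (2*x-2) p else 0
  end.

Section Q.
Variable p : R.
Hypothesis Hp : 0 < p < 1.

Lemma f_super (ps : R -> R) :
  (forall y, y <= 2 -> 1 <= ps y) -> (forall y, 0 <= ps y) ->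
  (forall y, p * ps ((y+1)/2) + (1-p) * ps (2*y-2) <= ps y) ->
  forall n y, f_approx n y p <= ps y.
Proof.
  intros H1 H0 Hs n. induction n; intros y; simpl.
  - destruct (Rle_dec y 2); [apply H1; auto | apply H0].
  - specialize (Hs y). pose proof (IHn ((y+1)/2)). pose proof (IHn (2*y-2)). nra.
Qed.

Lemma Ev_super (g ps : R -> R) :
  (forall y, g y <= ps y) ->
  (forall y, p * ps ((y+1)/2) + (1-p) * ps (2*y-2) <= ps y) ->
  forall n y, Ev g n y p <= ps y.
Proof.
  intros H1 Hs n. induction n; intros y; simpl; auto.
  specialize (Hs y). pose proof (IHn ((y+1)/2)). pose proof (IHn (2*y-2)). nra.
Qed.

Lemma Ev_le (g1 g2 : R -> R) : (forall y, g1 y <= g2 y) -> forall n y, Ev g1 n y p <= Ev g2 n y p.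
Proof.
  intros H n. induction n; intros y; simpl; auto.
  pose proof (IHn ((y+1)/2)). pose proof (IHn (2*y-2)). nra.
Qed.

Variable M : R.
Definition gV y := if Rle_dec y 2 then 0 else if Rle_dec y M then 1 else 0.

Lemma V_zero n : forall y, y <= 2 -> Ev gV n y p = 0.
Proof.
  induction n; intros y Hy; simpl.
  - unfold gV. destruct (Rle_dec y 2); lra.
  - rewrite !IHn by lra. ring.
Qed.

Lemma V_nonneg n : forall y, 0 <= Ev gV n y p.
Proof.
  induction n; intros y; simpl.
  - unfold gV. destruct (Rle_dec y 2); [lra|]. destruct (Rle_dec y M); lra.
  - pose proof (IHn ((y+1)/2)). pose proof (IHn (2*y-2)). nra.
Qed.

Lemma tail1 m eps : 0 <= eps -> (forall y, M < y -> f_approx m y p <= eps) ->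
  forall N x, f_approx (N+m) x p - f_approx N x p <= eps + Ev gV N x p.
Proof.
  intros He Hm N. induction N; intros x.
  - change (0 + m)%nat with m. cbn [f_approx Ev]. unfold gV.
    destruct (Rle_dec x 2).
    + rewrite (f_one p Hp) by auto. lra.
    + destruct (Rle_dec x M).
      * pose proof (f_bounds p Hp m x). lra.
      * specialize (Hm x ltac:(lra)). lra.
  - change (S N + m)%nat with (S (N + m)). cbn [f_approx Ev].
    pose proof (IHN ((x+1)/2)). pose proof (IHN (2*x-2)). nra.
Qed.
End Q.

Lemma pow_le1 x n : 0 <= x <= 1 -> x ^ n <= 1.
Proof. intros H. induction n; simpl; [lra|]. pose proof (pow_le x n ltac:(lra)). nra. Qed.

Section S.
Variable p : R.
Hypothesis Hp : 0 < p < 1.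
Variable M' : R.

Lemma s_low n x : x <= 2 -> sN M' n x p = 0.
Proof. intros H. destruct n; simpl; destruct (Rle_dec x 2); lra. Qed.

Lemma s_high n x : M' < x -> sN M' n x p = 0.
Proof. intros H. destruct n; simpl; destruct (Rle_dec x 2); try lra; destruct (Rle_dec x M'); lra. Qed.

Lemma s_bounds n : forall x, 0 <= sN M' n x p <= 1.
Proof.
  induction n; intros x; simpl.
  - destruct (Rle_dec x 2); [lra|]. destruct (Rle_dec x M'); lra.
  - destruct (Rle_dec x 2); [lra|]. destruct (Rle_dec x M'); [|lra].
    pose proof (IHn ((x+1)/2)). pose proof (IHn (2*x-2)). nra.
Qed.

Lemma s_mono n : forall x, sN M' (S n) x p <= sN M' n x p.
Proof.
  induction n; intros x.
  - cbn [sN]. destruct (Rle_dec x 2); [lra|]. destruct (Rle_dec x M'); [|lra].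
    pose proof (s_bounds 0 ((x+1)/2)). pose proof (s_bounds 0 (2*x-2)). simpl in *. nra.
  - change (sN M' (S (S n)) x p) with (if Rle_dec x 2 then 0 else if Rle_dec x M' then
             p * sN M' (S n) ((x+1)/2) p + (1-p) * sN M' (S n) (2*x-2) p else 0).
    change (sN M' (S n) x p) with (if Rle_dec x 2 then 0 else if Rle_dec x M' then
             p * sN M' n ((x+1)/2) p + (1-p) * sN M' n (2*x-2) p else 0).
    destruct (Rle_dec x 2); [lra|]. destruct (Rle_dec x M'); [|lra].
    pose proof (IHn ((x+1)/2)). pose proof (IHn (2*x-2)). nra.
Qed.

Lemma s_mono_add n d : forall x, sN M' (n + d) x p <= sN M' n x p.
Proof.
  induction d; intros x.
  - rewrite Nat.add_0_r. lra.
  - rewrite Nat.add_succ_r. pose proof (s_mono (n+d) x). pose proof (IHd x). lra.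
Qed.

Lemma s_geomA N S : 0 <= S -> (forall y, sN M' N y p <= S) ->
  forall j x, x - 1 <= 2^j -> sN M' (N + j) x p <= (1 - p^j) * S.
Proof.
  intros HS HN j. induction j; intros x Hx.
  - simpl in Hx. rewrite s_low by lra. simpl. lra.
  - rewrite Nat.add_succ_r. cbn [sN].
    assert (Hpj : 0 <= p^j <= 1) by (split; [apply pow_le; lra | apply pow_le1; lra]).
    simpl pow.
    destruct (Rle_dec x 2). { apply Rmult_le_pos; nra. }
    destruct (Rle_dec x M'); [| apply Rmult_le_pos; nra].
    simpl in Hx.
    specialize (IHj ((x+1)/2) ltac:(lra)).
    pose proof (s_mono_add N j (2*x-2)). pose proof (HN (2*x-2)).
    assert (p * sN M' (N+j) ((x+1)/2) p <= p * ((1 - p^j) * S)) by (apply Rmult_le_compat_l; lra).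
    assert ((1-p) * sN M' (N+j) (2*x-2) p <= (1-p) * S) by (apply Rmult_le_compat_l; lra).
    nra.
Qed.

Lemma s_geomB k : M' - 1 <= 2^k -> forall N S, 0 <= S -> (forall y, sN M' N y p <= S) ->
  forall x, sN M' (N + k) x p <= (1 - p^k) * S.
Proof.
  intros Hk N S HS HN x.
  assert (Hpk : 0 <= p^k <= 1) by (split; [apply pow_le; lra | apply pow_le1; lra]).
  destruct (Rle_dec x M').
  - apply s_geomA; auto. lra.
  - rewrite s_high by lra. apply Rmult_le_pos; lra.
Qed.

Lemma s_geom k : M' - 1 <= 2^k -> forall j x, sN M' (j * k) x p <= (1 - p^k)^j.
Proof.
  intros Hk j. induction j; intros x.
  - simpl. pose proof (s_bounds 0 x). simpl in H. lra.
  - replace (S j * k)%nat with (j*k + k)%nat by lia.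
    assert (Hpk : 0 <= p^k <= 1) by (split; [apply pow_le; lra | apply pow_le1; lra]).
    simpl pow.
    apply s_geomB; auto. apply pow_le; lra.
Qed.

Variable M : R.
Definition gM y := if Rle_dec y M then 1 else 0.

Lemma tail2 eps : M <= M' -> 0 <= eps -> (forall n y, M' < y -> Ev gM n y p <= eps) ->
  forall N x, Ev (gV M) N x p <= sN M' N x p + eps.
Proof.
  intros HMM He Hh N. induction N; intros x.
  - cbn [Ev sN]. unfold gV. destruct (Rle_dec x 2); [lra|].
    destruct (Rle_dec x M); destruct (Rle_dec x M'); lra.
  - destruct (Rle_dec x 2).
    { rewrite V_zero by (auto; lra). pose proof (s_bounds (S N) x). lra. }
    destruct (Rle_dec x M').
    + cbn [Ev sN]. destruct (Rle_dec x 2); [lra|]. destruct (Rle_dec x M'); [|lra].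
      pose proof (IHN ((x+1)/2)). pose proof (IHN (2*x-2)). nra.
    + rewrite s_high by lra.
      pose proof (Ev_le p Hp (gV M) gM ltac:(intros y; unfold gV, gM; destruct (Rle_dec y 2); destruct (Rle_dec y M); lra) (S N) x).
      specialize (Hh (S N) x ltac:(lra)). lra.
Qed.
End S.

Lemma INR_le_pow2 n : INR n <= 2 ^ n.
Proof.
  induction n; [simpl; lra|]. rewrite S_INR. cbn [pow].
  assert (1 <= 2^n) by (clear IHn; induction n; simpl; lra). lra.
Qed.

Lemma tail_unif pa pb : 0 < pa -> pb < 1/2 -> forall eps, 0 < eps ->
  exists N0, forall N, (N0 <= N)%nat -> forall m x p, pa <= p <= pb ->
    f_approx (N+m) x p - f_approx N x p <= 3*eps.
Proof.
  intros Hpa Hpb eps He.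
  destruct (Rle_dec pa pb) as [Hab|Hab]; [| exists 0%nat; intros; lra].
  set (q := 3/2 - pb). set (d := (1/2-pb)*(1/2-pb)*(2-pb)).
  set (L0 := 2 + 1/(2*d)). set (th := ln q / ln 2).
  assert (Hq : 1 < q <= 2) by (unfold q; lra).
  assert (Hd : 0 < d) by (unfold d; apply Rmult_lt_0_compat; [nra|lra]).
  assert (Hineq : forall p, pa <= p <= pb -> p * q + (1-p) * ((1+d)/q) <= 1).
  { intros p Hp.
    assert (H1 : p*q*q + (1-p)*(1+d) <= q).
    { assert (E : q - p*q*q - (1-p)*(1+d) = (q-1)*(1-p*(q+1)) - (1-p)*d) by ring.
      assert (H2 : 1 - p*(q+1) >= (1/2-pb)*(2-pb)) by (unfold q; nra).
      assert (H3 : (q-1)*(1-p*(q+1)) >= (q-1)*((1/2-pb)*(2-pb))).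
      { apply Rle_ge, Rmult_le_compat_l; lra. }
      assert (H4 : (1-p)*d <= d) by nra.
      assert (H5 : (q-1)*((1/2-pb)*(2-pb)) = d) by (unfold q, d; field).
      lra. }
    apply Rmult_le_reg_r with q; [lra|].
    replace ((p * q + (1 - p) * ((1 + d) / q)) * q) with (p*q*q + (1-p)*(1+d)) by (field; lra).
    lra. }
  assert (HL0 : 2 < L0). { unfold L0. assert (0 < 1/(2*d)) by (apply Rdiv_lt_0_compat; lra). lra. }
  destruct (th_props q Hq) as [[Hth0 Hth1] _]. fold th in Hth0, Hth1.
  assert (Hsup : forall L, L0 <= L -> forall p, pa <= p <= pb -> forall y,
     p * psi th L ((y+1)/2) + (1-p) * psi th L (2*y-2) <= psi th L y).
  { intros L HL p Hp y. apply (psi_super p q d L); auto. lra. }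
  destruct (psi_small th L0 Hth0 ltac:(lra) eps He) as [M [HM1 HM2]].
  destruct (psi_small th M Hth0 ltac:(lra) eps He) as [M' [HM'1 HM'2]].
  destruct (INR_archimed 1 M' ltac:(lra)) as [k Hk].
  assert (Hk2 : M' - 1 <= 2^k) by (pose proof (INR_le_pow2 k); lra).
  assert (Hpak : 0 < pa^k <= 1) by (split; [apply pow_lt; lra | apply pow_le1; lra]).
  destruct (pow_lt_1_zero (1 - pa^k) ltac:(rewrite Rabs_right; lra) eps He) as [j Hj].
  exists (j * k)%nat. intros N HN m x p Hp.
  assert (Hp' : 0 < p < 1) by lra.
  pose proof (tail1 p Hp' M m eps ltac:(lra)) as T1.
  assert (Hm : forall y, M < y -> f_approx m y p <= eps).
  { intros y Hy. eapply Rle_trans; [apply (f_super p Hp' (psi th L0))|].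
    - intros z Hz. unfold psi. destruct (Rle_dec z L0); lra.
    - intros z. apply psi_bounds; lra.
    - apply Hsup; auto; lra.
    - apply HM2; auto. }
  specialize (T1 Hm N x).
  assert (Hh : forall n y, M' < y -> Ev (gM M) n y p <= eps).
  { intros n y Hy. eapply Rle_trans; [apply (Ev_super p Hp' (gM M) (psi th M))|].
    - intros z. unfold gM, psi. destruct (Rle_dec z M); [lra|]. left; apply exp_pos.
    - apply Hsup; auto.
    - apply HM'2; auto. }
  pose proof (tail2 p Hp' M' M eps HM'1 ltac:(lra) Hh N x) as T2.
  assert (T3 : sN M' N x p <= (1 - pa^k)^j).
  { replace N with (j*k + (N - j*k))%nat by lia.
    eapply Rle_trans; [apply s_mono_add; auto|].
    eapply Rle_trans; [apply s_geom; auto|].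
    apply pow_incr. split.
    - pose proof (pow_le1 p k ltac:(lra)). lra.
    - assert (pa^k <= p^k) by (apply pow_incr; lra). lra. }
  specialize (Hj j (Nat.le_refl j)). pose proof (Rle_abs ((1 - pa^k)^j)).
  lra.
Qed.

Lemma f_conv pa pb : 0 < pa -> pb < 1/2 -> forall eps, 0 < eps ->
  exists N0, forall N, (N0 <= N)%nat -> forall x p, pa <= p <= pb ->
    Rabs (f_approx N x p - ruin_f x p) < eps.
Proof.
  intros Hpa Hpb eps He.
  destruct (tail_unif pa pb Hpa Hpb (eps/4) ltac:(lra)) as [N0 HN0].
  exists N0. intros N HN x p Hp.
  assert (Hp' : 0 < p < 1) by lra.
  pose proof (ruin_f_lim p Hp' x) as Hl.
  assert (H1 : f_approx N x p <= ruin_f x p).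
  { pose proof (Rr_le_f p Hp'). 
    set (u := fun n => Rr n x p).
    assert (Hex : ex_finite_lim_seq u).
    { apply ex_finite_lim_seq_incr with 1. intros; apply Rr_mono; auto. intros; apply Rr_bounds; auto. }
    assert (E : ruin_f x p = real (Lim_seq u)).
    { unfold ruin_f. f_equal. apply Lim_seq_ext. intros; apply ruin_prob_Rr. }
    rewrite E. apply f_le_lim; auto. }
  assert (H2 : ruin_f x p <= f_approx N x p + 3*(eps/4)).
  { apply (is_lim_seq_incr_n _ N) in Hl.
    assert (Hc := is_lim_seq_const (f_approx N x p + 3*(eps/4))).
    assert (Hcmp : forall m, f_approx (m + N) x p <= f_approx N x p + 3*(eps/4)).
    { intros m. rewrite Nat.add_comm. pose proof (HN0 N HN m x p Hp). lra. }
    pose proof (is_lim_seq_le _ _ _ _ Hcmp Hl Hc) as Hle.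
    simpl in Hle. exact Hle. }
  rewrite Rabs_left1 by lra. lra.
Qed.

Theorem proposition1p3 :
  (forall x : R, 2 < x ->
     forall a b : R, 0 < a -> b < 1 / 2 ->
     forall eps : R, 0 < eps ->
     exists N : nat, forall n : nat, (N <= n)%nat ->
       forall p : R, a <= p <= b -> Rabs (f_approx n x p - ruin_f x p) < eps) /\
  (forall p : R, 0 < p < 1 / 2 ->
     forall a b : R, 2 < a ->
     forall eps : R, 0 < eps ->
     exists N : nat, forall n : nat, (N <= n)%nat ->
       forall x : R, a <= x <= b -> Rabs (f_approx n x p - ruin_f x p) < eps) /\
  (forall x p : R, 2 < x -> 0 < p < 1 / 2 ->
     ruin_f x p = p * ruin_f ((x + 1) / 2) p + (1 - p) * ruin_f (2 * x - 2) p).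
Proof.
  split; [|split].
  - intros x _ a b Ha Hb eps He.
    destruct (f_conv a b Ha Hb eps He) as [N HN].
    exists N. intros n Hn p Hp. apply HN; auto.
  - intros p Hp a b _ eps He.
    destruct (f_conv p p ltac:(lra) ltac:(lra) eps He) as [N HN].
    exists N. intros n Hn x Hx. apply HN; auto; lra.
  - intros x p _ Hp.
    assert (Hp' : 0 < p < 1) by lra.
    pose proof (ruin_f_lim p Hp' x) as H0.
    pose proof (ruin_f_lim p Hp' ((x+1)/2)) as H1.
    pose proof (ruin_f_lim p Hp' (2*x-2)) as H2.
    apply is_lim_seq_incr_1 in H0. cbn [f_approx] in H0.
    apply (is_lim_seq_scal_l _ p) in H1.
    apply (is_lim_seq_scal_l _ (1-p)) in H2.
    pose proof (is_lim_seq_plus' _ _ _ _ H1 H2) as H3.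
    simpl in H3.
    apply is_lim_seq_unique in H0. apply is_lim_seq_unique in H3.
    rewrite H0 in H3. injection H3. auto.
Qed.
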